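(* Let $n\ge 4$ and let $D_n$ be the tree on vertex set $\{1,\ldots,n\}$ with edges $\{1,3\}$, $\{2,3\}$ and $\{i,i+1\}$ for $3\le i\le n-1$, with adjacency matrix $A$; let $W(D_n)=[e_n,Ae_n,\ldots,A^{n-1}e_n]$ and let $\hat W(D_n)$ be obtained from $W(D_n)$ by deleting the first row and the last column. Let $B$ be the $(n-1)\times(n-1)$ tridiagonal matrix with zero diagonal, $B_{1,2}=1$, $B_{2,1}=2$, and $B_{i,i+1}=B_{i+1,i}=1$ for $2\le i\le n-2$, all other entries $0$. Then $\hat W(D_n)=W(B)$, where $W(B)=[e_{n-1},Be_{n-1},\ldots,B^{n-2}e_{n-1}]$.
   Context: $e_m$ denotes the all-ones vector of length $m$. For an $m\times m$ matrix $M$, $W(M)=[e_m,Me_m,\ldots,M^{m-1}e_m]$. *)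

(* Defs.v *)
From mathcomp Require Import all_boot all_order all_algebra.
Set Implicit Arguments. Unset Strict Implicit. Unset Printing Implicit Defensive.
Import GRing.Theory.
Local Open Scope ring_scope.

(* All indices are 0-based: vertex k of the paper is index k-1 here. *)

(* all-ones column vector e_m *)
Definition ones (m : nat) : 'cV[int]_m := const_mx 1.

Definition Wmx (m : nat) (M : 'M[int]_m) : 'M[int]_m :=
  \matrix_(i < m, j < m) ((M ^+ j) *m ones m) i ord0.

Definition Dn_edge (n : nat) (i j : 'I_n) : bool :=
  [|| [&& (i : nat) == 0%N & (j : nat) == 2%N],
      [&& (i : nat) == 1%N & (j : nat) == 2%N] |
      [&& (2 <= i)%N & (j : nat) == i.+1] ].

Definition Dn_adj (n : nat) : 'M[int]_n :=
  \matrix_(i < n, j < n) ((Dn_edge i j || Dn_edge j i) : int).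

Definition What (m : nat) (W : 'M[int]_m.+1) : 'M[int]_m :=
  \matrix_(i < m, j < m) W (lift ord0 i) (widen_ord (leqnSn m) j).

Definition Bmx (m : nat) : 'M[int]_m :=
  \matrix_(i < m, j < m)
    (if [&& (i : nat) == 0%N & (j : nat) == 1%N] then 1
     else if [&& (i : nat) == 1%N & (j : nat) == 0%N] then 2
     else if [&& (1 <= i)%N & (j : nat) == i.+1] then 1
     else if [&& (1 <= j)%N & (i : nat) == j.+1] then 1
     else 0).

(* Main.v *)
Require Import Defs.
From mathcomp Require Import all_boot all_order all_algebra.
Local Open Scope ring_scope.
Import GRing.Theory.

Lemma entryB (p : nat) (i l : 'I_p.+1) :
  Dn_adj p.+2 (lift ord0 i) (lift ord0 l) + ((((i : nat) == 1%N) && ((l : nat) == 0%N)) : int)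
  = Bmx p.+1 i l.
Proof.
rewrite !mxE /Dn_edge !lift0.
move: (nat_of_ord i) (nat_of_ord l) => a b.
case: a => [|[|a]]; case: b => [|[|b]] //=.
all: try by case: a.
all: try by case: b.
rewrite !eqSS addr0; case: (eqVneq b a.+1) => [->|nb] /=.
  by [].
by case: (a == b.+1).
Qed.

Lemma row01 (p : nat) (l : 'I_p.+2) :
  Dn_adj p.+2 ord0 l = Dn_adj p.+2 (lift ord0 ord0) l.
Proof.
rewrite !mxE /Dn_edge lift0 /=.
by case: (nat_of_ord l) => [|[|[|b]]].
Qed.

Lemma col0 (p : nat) (i : 'I_p.+1) :
  Dn_adj p.+2 (lift ord0 i) ord0 = (((i : nat) == 1%N) : int).
Proof.
rewrite !mxE /Dn_edge lift0 /=.
by case: (nat_of_ord i) => [|[|b]].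
Qed.

Lemma step (p : nat) (v : 'cV[int]_p.+2) (w : 'cV[int]_p.+1) :
  v ord0 ord0 = v (lift ord0 ord0) ord0 ->
  (forall i, v (lift ord0 i) ord0 = w i ord0) ->
  (Dn_adj p.+2 *m v) ord0 ord0 = (Dn_adj p.+2 *m v) (lift ord0 ord0) ord0 /\
  (forall i, (Dn_adj p.+2 *m v) (lift ord0 i) ord0 = (Bmx p.+1 *m w) i ord0).
Proof.
move=> h01 hw; split.
  by rewrite !mxE; apply: eq_bigr => l _; rewrite row01.
move=> i; rewrite !mxE big_ord_recl col0.
rewrite [RHS](eq_bigr (fun j => (Dn_adj p.+2 (lift ord0 i) (lift ord0 j) +
     ((((i : nat) == 1%N) && ((j : nat) == 0%N)) : int)) * w j ord0)); last first.
  by move=> j _; rewrite entryB.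
rewrite [RHS](eq_bigr _ (fun j _ => mulrDl _ _ _)) big_split /=.
have -> : \sum_(j < p.+1) ((((i:nat)==1%N) && ((j:nat)==0%N)) : int) * w j ord0
   = (((i:nat)==1%N):int) * w ord0 ord0.
  rewrite big_ord_recl big1 ?addr0 ?andbT // => l _.
  by rewrite lift0 /= andbF mul0r.
rewrite -hw -h01 addrC; congr (_ + _).
by apply: eq_bigr => l _; rewrite hw.
Qed.

Lemma inv (p k : nat) :
  let v := (Dn_adj p.+2 ^+ k *m ones p.+2) in
  v ord0 ord0 = v (lift ord0 ord0) ord0 /\
  (forall i, v (lift ord0 i) ord0 = (Bmx p.+1 ^+ k *m ones p.+1) i ord0).
Proof.
elim: k => [|k [IH1 IH2]] /=.
  by rewrite !expr0 !mul1mx; split => [|i]; rewrite !mxE.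
rewrite !exprS -!mulmxA; exact: step.
Qed.

Theorem lemma2p1 (m : nat) (hm : (3 <= m)%N) :
  What (Wmx (Dn_adj m.+1)) = Wmx (Bmx m).
Proof.
case: m hm => [//|p] _.
apply/matrixP => i j; have := (inv p j).2 i.
rewrite /What /Wmx => h; rewrite !mxE in h *.
exact: h.
Qed.
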